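(* Let $\mathcal H_X,\mathcal H_Y$ be finite-dimensional Hilbert spaces with $\dim\mathcal H_X\ge2$, let $\rho$ be a state on $\mathcal H_X\otimes\mathcal H_Y$, and let $\ket{\alpha_0},\ket{\alpha_1}\in\mathcal H_X$ be orthonormal. Define the operators on $\mathcal H_Y$ $$A=\bra{\alpha_0}\rho\ket{\alpha_0},\qquad B=\bra{\alpha_0}\rho\ket{\alpha_1},\qquad D=\bra{\alpha_1}\rho\ket{\alpha_1}$$ (partial matrix elements on the $X$ factor). Assume that $A\neq0$, $\operatorname{Ker}A\neq\{0\}$, and $P_{\operatorname{supp}A}\,B\,P_{\operatorname{Ker}A}\neq0$, where $P_{\operatorname{supp}A}$ and $P_{\operatorname{Ker}A}$ are the orthogonal projectors onto the support (range) and the kernel of $A$. Then $\rho$ is NPT across the cut $X|Y$ (its partial transpose with respect to $Y$ is not positive semidefinite), and the projective assemblage generated by projective measurements on $X$ admits no local hidden state model; hence $\rho$ is projectively steerable from $X$ to $Y$.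
   Context: For a bipartite state $\rho$ on $\mathcal H_X\otimes\mathcal H_Y$, the projective assemblage from $X$ to $Y$ consists of the unnormalized conditional states $\sigma_{a|M}=\operatorname{tr}_X[(\Pi_a\otimes I_Y)\rho]$ for all projective measurements $M=\{\Pi_a\}$ on $\mathcal H_X$. It admits a local hidden state (LHS) model if there exist a probability space $(\Lambda,\mu)$, density matrices $\tau_\lambda$ on $\mathcal H_Y$ (measurable in $\lambda$) and response functions $p(a|M,\lambda)\ge0$ with $\sum_a p(a|M,\lambda)=1$ such that $\sigma_{a|M}=\int_\Lambda p(a|M,\lambda)\tau_\lambda\,d\mu(\lambda)$ for all $M$ and $a$. The state is projectively steerable from $X$ to $Y$ if no such model exists. NPT means the partial transpose (with respect to any fixed basis of $\mathcal H_Y$) is not positive semidefinite. *)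

(* Defs.v *)
From HB Require Import structures.
From mathcomp Require Import all_boot all_order all_algebra.
From mathcomp Require Import all_classical all_reals all_analysis.
From mathcomp Require Import complex.

Set Implicit Arguments.
Unset Strict Implicit.
Unset Printing Implicit Defensive.

Import Order.TTheory GRing.Theory Num.Theory.
Local Open Scope ring_scope.

(* Hilbert spaces: H_X = C^m, H_Y = C^n; operators act on column vectors.
   H_X (x) H_Y = C^(m*n), the basis vector |i> (x) |k> having index
   mxvec_index i k. *)

Section QDefs.
Variable R : realType.
Local Notation C := (R[i]).

Definition adj (p q : nat) (A : 'M[C]_(p, q)) : 'M[C]_(q, p) :=
  map_mx Num.conj A^T.

Definition psd (N : nat) (A : 'M[C]_N) : Prop :=
  forall v : 'cV[C]_N, 0 <= (adj v *m A *m v) 0 0.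

Definition density (N : nat) (A : 'M[C]_N) : Prop :=
  psd A /\ \tr A = 1.

Definition orthonormal2 (m : nat) (a0 a1 : 'cV[C]_m) : Prop :=
  adj a0 *m a0 = 1%:M /\ adj a1 *m a1 = 1%:M /\ adj a0 *m a1 = 0.

(* partial matrix element  <a| rho |b>  on the X factor: an operator on H_Y *)
Definition pmel (m n : nat) (a b : 'cV[C]_m) (rho : 'M[C]_(m * n)) : 'M[C]_n :=
  \matrix_(k, l) \sum_(i < m) \sum_(j < m)
     Num.conj (a i 0) * rho (mxvec_index i k) (mxvec_index j l) * b j 0.

Definition range_of (n : nat) (A : 'M[C]_n) (v : 'cV[C]_n) : Prop :=
  exists w : 'cV[C]_n, v = A *m w.
Definition ker_of (n : nat) (A : 'M[C]_n) (v : 'cV[C]_n) : Prop :=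
  A *m v = 0.

Definition orth_proj_onto (n : nat) (P : 'M[C]_n) (S : 'cV[C]_n -> Prop) : Prop :=
  P *m P = P /\ adj P = P /\ (forall v, S v <-> P *m v = v).

(* partial transpose with respect to Y:
   (rho^{T_Y})_{(i,k),(j,l)} = rho_{(i,l),(j,k)} *)
Definition ptransY (m n : nat) (rho : 'M[C]_(m * n)) : 'M[C]_(m * n) :=
  \sum_(i < m) \sum_(j < m) \sum_(k < n) \sum_(l < n)
     rho (mxvec_index i k) (mxvec_index j l)
       *: delta_mx (mxvec_index i l) (mxvec_index j k).

Definition NPT (m n : nat) (rho : 'M[C]_(m * n)) : Prop := ~ psd (ptransY rho).

Record PVM (m : nat) := {
  pvm_K : nat;
  pvm_Pi : 'I_pvm_K -> 'M[C]_m;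
  pvm_herm : forall a, adj (pvm_Pi a) = pvm_Pi a;
  pvm_idem : forall a, pvm_Pi a *m pvm_Pi a = pvm_Pi a;
  pvm_sum : \sum_(a < pvm_K) pvm_Pi a = 1%:M }.
Arguments pvm_Pi {m} p a.

(* sigma_{a|M} = tr_X[(Pi_a (x) I_Y) rho] *)
Definition assemblage (m n : nat) (rho : 'M[C]_(m * n)) (M : PVM m)
  (a : 'I_(pvm_K M)) : 'M[C]_n :=
  \matrix_(k, l) \sum_(i < m) \sum_(j < m)
     pvm_Pi M a i j * rho (mxvec_index j k) (mxvec_index i l).
Arguments assemblage {m n} rho M a.

(* local hidden state model for the projective assemblage; the integral of
   the matrix-valued function is taken entrywise (real and imaginary parts). *)
Definition has_LHS_model (m n : nat) (rho : 'M[C]_(m * n)) : Prop :=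
  exists (d : measure_display) (L : measurableType d) (mu : probability L R)
         (tau : L -> 'M[C]_n) (p : forall M : PVM m, 'I_(pvm_K M) -> L -> R),
    (forall x, density (tau x)) /\
    (forall k l, measurable_fun setT (fun x => complex.Re (tau x k l)) /\
                 measurable_fun setT (fun x => complex.Im (tau x k l))) /\
    (forall M a, measurable_fun setT (p M a)) /\
    (forall M a x, 0 <= p M a x) /\
    (forall M x, \sum_(a < pvm_K M) p M a x = 1) /\
    (forall M a k l,
        ((complex.Re (assemblage rho M a k l))%:E =
           (\int[mu]_x ((p M a x * complex.Re (tau x k l))%:E))%E) /\
        ((complex.Im (assemblage rho M a k l))%:E =
           (\int[mu]_x ((p M a x * complex.Im (tau x k l))%:E))%E)).

Definition proj_steerable (m n : nat) (rho : 'M[C]_(m * n)) : Prop :=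
  ~ has_LHS_model rho.

End QDefs.

(* Main.v *)
Require Import Defs.
From HB Require Import structures.
From mathcomp Require Import all_boot all_order all_algebra.
From mathcomp Require Import all_classical all_reals all_analysis.
From mathcomp Require Import complex.
From mathcomp Require Import ring lra.
Import Order.TTheory GRing.Theory Num.Theory.
Import numFieldNormedType.Exports.
Local Open Scope ring_scope.
Set Implicit Arguments.
Unset Strict Implicit.
Unset Printing Implicit Defensive.

Section LA.
Variable R : realType.
Local Notation C := (R[i]).

Definition qf (N : nat) (M : 'M[C]_N) (a b : 'cV[C]_N) : C := (adj a *m M *m b) 0 0.

Lemma qadjD (p q : nat) (A B : 'M[C]_(p, q)) : adj (A + B) = adj A + adj B.
Proof. by apply/matrixP => i j; rewrite !mxE rmorphD. Qed.

Lemma qadjZ (p q : nat) k (A : 'M[C]_(p, q)) : adj (k *: A) = k^* *: adj A.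
Proof. by apply/matrixP => i j; rewrite !mxE rmorphM. Qed.

Lemma qadjM (p q r : nat) (A : 'M[C]_(p, q)) (B : 'M[C]_(q, r)) :
  adj (A *m B) = adj B *m adj A.
Proof.
apply/matrixP => i j; rewrite !mxE rmorph_sum; apply: eq_bigr => k _.
by rewrite !mxE rmorphM mulrC.
Qed.

Lemma qadjK (p q : nat) (A : 'M[C]_(p, q)) : adj (adj A) = A.
Proof. by apply/matrixP => i j; rewrite !mxE conjCK. Qed.

Lemma qfDl N (M : 'M[C]_N) a b c : qf M (a + b) c = qf M a c + qf M b c.
Proof. by rewrite /qf qadjD !mulmxDl mxE. Qed.
Lemma qfDr N (M : 'M[C]_N) a b c : qf M c (a + b) = qf M c a + qf M c b.
Proof. by rewrite /qf mulmxDr mxE. Qed.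
Lemma qfZl N (M : 'M[C]_N) k a c : qf M (k *: a) c = k^* * qf M a c.
Proof. by rewrite /qf qadjZ -!scalemxAl mxE. Qed.
Lemma qfZr N (M : 'M[C]_N) k a c : qf M c (k *: a) = k * qf M c a.
Proof. by rewrite /qf -scalemxAr mxE. Qed.
Lemma qfMD N (M1 M2 : 'M[C]_N) a c : qf (M1 + M2) a c = qf M1 a c + qf M2 a c.
Proof. by rewrite /qf mulmxDr mulmxDl mxE. Qed.
Lemma qfMZ N k (M : 'M[C]_N) a c : qf (k *: M) a c = k * qf M a c.
Proof. by rewrite /qf -scalemxAr -scalemxAl mxE. Qed.
Lemma qfM0 N (a c : 'cV[C]_N) : qf 0 a c = 0.
Proof. by rewrite /qf mulmx0 mul0mx mxE. Qed.
Lemma qfMsum N I (r : seq I) (P : pred I) (F : I -> 'M[C]_N) a c :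
  qf (\sum_(i <- r | P i) F i) a c = \sum_(i <- r | P i) qf (F i) a c.
Proof.
elim/big_rec2: _ => [|i y M _ <-]; first exact: qfM0.
by rewrite qfMD.
Qed.
Lemma qf_delta N (I J : 'I_N) a c : qf (delta_mx I J) a c = (a I 0)^* * c J 0.
Proof.
rewrite /qf mxE (bigD1 J) //= big1 ?addr0; last first.
  move=> k /negbTE kJ.
  rewrite mxE big1 ?mul0r // => l _; by rewrite !mxE kJ andbF mulr0.
rewrite mxE (bigD1 I) //= big1 ?addr0; last first.
  by move=> l /negbTE lI; rewrite !mxE lI mulr0.
by rewrite !mxE !eqxx mulr1.
Qed.

Lemma qfE N (M : 'M[C]_N) a c :
  qf M a c = \sum_k \sum_l ((a k 0)^* * c l 0) * M k l.
Proof.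
rewrite {1}[M]matrix_sum_delta qfMsum; apply: eq_bigr => k _.
rewrite qfMsum; apply: eq_bigr => l _.
by rewrite qfMZ qf_delta mulrC.
Qed.

End LA.

Section PSD.
Variable R : realType.
Local Notation C := (R[i]).

Lemma psd_herm N (M : 'M[C]_N) a b : psd M -> qf M b a = (qf M a b)^*.
Proof.
move=> H.
have h1 : 0 <= qf M (a + b) (a + b) := H _.
have h2 : 0 <= qf M (a + 'i *: b) (a + 'i *: b) := H _.
have h3 : 0 <= qf M a a := H _.
have h4 : 0 <= qf M b b := H _.
move: h1 h2 h3 h4; rewrite !qfDl !qfDr !qfZl !qfZr.
case: (qf M a b) => x1 x2; case: (qf M b a) => y1 y2.
case: (qf M a a) => p1 p2; case: (qf M b b) => q1 q2.
rewrite !lecE /=.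
move=> /andP[/eqP e1 _] /andP[/eqP e2 _] /andP[/eqP e3 _] /andP[/eqP e4 _].
apply/eqP; rewrite eq_complex /=; apply/andP; split; apply/eqP; lra.
Qed.
End PSD.
Section PSD2.
Variable R : realType.
Local Notation C := (R[i]).
Lemma psd_zero N (M : 'M[C]_N) a b : psd M -> qf M a a = 0 -> qf M a b = 0.
Proof.
move=> H Haa.
have hba := psd_herm a b H.
have hb : 0 <= qf M b b := H _.
case E: (qf M a b) hba => [z1 z2] hba.
have [z0|zn0] := eqVneq (z1 ^+ 2 + z2 ^+ 2) 0.
  have Z1 : z1 = 0 by nra.
  have Z2 : z2 = 0 by nra.
  by rewrite Z1 Z2.
have zp : 0 < z1 ^+ 2 + z2 ^+ 2 by rewrite lt0r zn0 /=; nra.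
exfalso.
move: hb; case Eb: (qf M b b) => [q1 q2] hb.
set t := (q1 + 1) / (z1 ^+ 2 + z2 ^+ 2).
have ht : t * (z1 ^+ 2 + z2 ^+ 2) = q1 + 1 by rewrite /t mulfVK // gt_eqF.
have := H (b + (Complex (- t * z1) (- t * z2)) *: a).
rewrite -/(qf _ _ _) !qfDl !qfDr !qfZl !qfZr Haa hba E Eb.
move: hb; rewrite !lecE /= => /andP[_ hq].
move=> /andP[_ h]. suff : (0:R) < 0 by rewrite ltxx. nra.
Qed.
End PSD2.

Section KV.
Variable R : realType.
Local Notation C := (R[i]).
Variables m n : nat.

Definition kv (a : 'cV[C]_m) (f : 'cV[C]_n) : 'cV[C]_(m * n) :=
  (mxvec (a *m f^T))^T.

Lemma kvE a f i k : kv a f (mxvec_index i k) 0 = a i 0 * f k 0.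
Proof. by rewrite /kv mxE mxvecE mxE big_ord1 !mxE. Qed.

Lemma sum_mxvec (F : 'I_(m * n) -> C) :
  \sum_I F I = \sum_i \sum_k F (mxvec_index i k).
Proof.
rewrite (reindex _ (curry_mxvec_bij _ _)) /= pair_bigA /=.
by apply: eq_bigr => -[i k].
Qed.

Lemma kvDl a b f : kv (a + b) f = kv a f + kv b f.
Proof.
apply/matrixP => I j; rewrite (ord1 j); case/mxvec_indexP: I => i k.
by rewrite [RHS]mxE !kvE !mxE mulrDl.
Qed.

Lemma kvZl k a f : kv (k *: a) f = k *: kv a f.
Proof.
apply/matrixP => I j; rewrite (ord1 j); case/mxvec_indexP: I => i l.
by rewrite [RHS]mxE !kvE !mxE mulrA.
Qed.

Lemma qf_kv (rho : 'M[C]_(m * n)) a b f g :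
  qf rho (kv a f) (kv b g) = qf (pmel a b rho) f g.
Proof.
rewrite !qfE sum_mxvec.
under eq_bigr => i _ do under eq_bigr => k _ do rewrite sum_mxvec.
rewrite exchange_big /=; apply: eq_bigr => k _.
under [RHS]eq_bigr => l _ do rewrite mxE mulr_sumr.
rewrite [RHS]exchange_big /=; apply: eq_bigr => i _.
under [RHS]eq_bigr => l _ do rewrite mulr_sumr.
rewrite [RHS]exchange_big /=; apply: eq_bigr => j _.
apply: eq_bigr => l _.
rewrite !kvE rmorphM; ring.
Qed.

Lemma qf_pt (rho : 'M[C]_(m * n)) a b f g :
  qf (ptransY rho) (kv a f) (kv b g) =
  qf (pmel a b rho) (map_mx Num.conj g) (map_mx Num.conj f).
Proof.
rewrite /ptransY qfMsum qfE.
under eq_bigr => i _ do rewrite qfMsum.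
under eq_bigr => i _ do under eq_bigr => j _ do rewrite qfMsum.
under eq_bigr => i _ do under eq_bigr => j _ do under eq_bigr => k _ do rewrite qfMsum.
under eq_bigr => i _ do under eq_bigr => j _ do under eq_bigr => k _ do under eq_bigr => l _ do rewrite qfMZ qf_delta !kvE.
under eq_bigr => i _ do rewrite exchange_big /=.
rewrite exchange_big /=; apply: eq_bigr => k _.
under eq_bigr => i _ do rewrite exchange_big /=.
rewrite exchange_big /=; apply: eq_bigr => l _.
rewrite !mxE mulr_sumr; apply: eq_bigr => i _.
rewrite mulr_sumr; apply: eq_bigr => j _.
rewrite conjCK rmorphM; ring.
Qed.
End KV.

Section NPT.
Variable R : realType.
Local Notation C := (R[i]).

Lemma get_v n (A B Ps Pk : 'M[C]_n) :
  orth_proj_onto Pk (ker_of A) -> Ps *m B *m Pk != 0 ->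
  exists v : 'cV[C]_n, A *m v = 0 /\ B *m v != 0.
Proof.
move=> [Pk2 [_ HK]] HB.
have [j Hj] : exists j : 'I_n, B *m (Pk *m delta_mx j (0 : 'I_1)) != 0.
  apply/existsP; move: HB; apply: contraR; rewrite negb_exists => /forallP H.
  have BP : B *m Pk = 0.
    apply/matrixP => i j; have /negPn/eqP/matrixP/(_ i 0) := H j.
    by rewrite mulmxA -colE !mxE.
  by rewrite -mulmxA BP mulmx0.
exists (Pk *m delta_mx j 0); split => //.
by apply/(HK _); rewrite mulmxA Pk2.
Qed.

Lemma pos_norm n (w : 'cV[C]_n) : w != 0 -> 0 < (adj w *m w) 0 0.
Proof.
move=> wn0.
have [k Hk] : exists k, w k 0 != 0.
  apply/existsP; move: wn0; apply: contraR; rewrite negb_exists => /forallP H.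
  by apply/eqP/matrixP => i j; rewrite (ord1 j) mxE; apply/eqP; rewrite -[_ == _]negbK H.
rewrite mxE (bigD1 k) //= ltr_pwDl //.
  by rewrite !mxE mulrC mul_conjC_gt0.
by apply: sumr_ge0 => i _; rewrite !mxE mulrC mul_conjC_ge0.
Qed.

Lemma qf_ker m n (rho : 'M[C]_(m * n)) (a0 : 'cV[C]_m) (v : 'cV[C]_n) (w : 'cV[C]_(m * n)) : psd rho ->
  pmel a0 a0 rho *m v = 0 ->
  qf rho (kv a0 v) w = 0 /\ qf rho w (kv a0 v) = 0.
Proof.
move=> Hr Hv.
have H0 : qf rho (kv a0 v) (kv a0 v) = 0.
  by rewrite qf_kv /qf -mulmxA Hv mulmx0 mxE.
have := psd_zero w Hr H0 => h; split => //.
by rewrite (psd_herm _ _ Hr) h rmorph0.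
Qed.

Lemma npt_main m n (rho : 'M[C]_(m * n)) (a0 a1 : 'cV[C]_m) (v : 'cV[C]_n) : psd rho ->
  pmel a0 a0 rho *m v = 0 -> pmel a0 a1 rho *m v != 0 -> NPT rho.
Proof.
move=> Hr Hv HBv HPT.
set u := pmel a0 a1 rho *m v.
set b := qf (pmel a0 a1 rho) u v.
have bE : b = (adj u *m u) 0 0 by rewrite /b /qf -mulmxA.
have bp : 0 < b by rewrite bE pos_norm.
have bc : b^* = b by apply/conj_Creal/gtr0_real.
set q := qf (pmel a1 a1 rho) u u.
have q0 : 0 <= q by rewrite /q -qf_kv; apply: Hr.
have qc : q^* = q by apply/conj_Creal/ger0_real.
have ccK (x : 'cV[C]_n) : map_mx Num.conj (map_mx Num.conj x) = x.
  by apply/matrixP => i j; rewrite !mxE conjCK.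
set w := (q + 1) *: kv a0 (map_mx Num.conj v) + (- b) *: kv a1 (map_mx Num.conj u).
have := HPT w.
rewrite -/(qf _ _ _) /w !qfDl !qfDr !qfZl !qfZr !qf_pt !ccK.
rewrite -!qf_kv.
have [k1 k2] := qf_ker (kv a1 v) Hr Hv.
have [k3 k4] := qf_ker (kv a0 v) Hr Hv.
rewrite k3.
rewrite (psd_herm (kv a0 u) (kv a1 v) Hr) !qf_kv -/b -/q bc.
have qc1 : (q + 1)^* = q + 1 by apply/conj_Creal/ger0_real; rewrite addr_ge0.
have bc1 : (- b)^* = - b by apply/conj_Creal; rewrite rpredN gtr0_real.
rewrite qc1 bc1.
have -> : (q + 1) * ((q + 1) * 0) + (q + 1) * (- b * b) + (- b * ((q + 1) * b) + - b * (- b * q))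
   = - (b * b * (q + 2)) by ring.
rewrite oppr_ge0 => h.
have hp : 0 < b * b * (q + 2) by rewrite mulr_gt0 ?mulr_gt0 // ltr_wpDl.
by have := lt_le_trans hp h; rewrite ltxx.
Qed.
End NPT.

Section Core.
Local Open Scope classical_set_scope.
Variable R : realType.
Context d (L : measurableType d) (mu : probability L R).

Definition bdm (f : L -> R) := measurable_fun setT f /\ exists M : R, forall x, `|f x| <= M.

Lemma bdm_int f : bdm f -> mu.-integrable setT (EFin \o f).
Proof.
case=> mf [M hM]; apply: measurable_bounded_integrable => //.
  by move: (probability_setT mu) => /= ->; rewrite ltry.
rewrite /bounded_near; near=> K => x _ /=.
apply: le_trans (hM x) _; near: K; apply: nbhs_pinfty_ge; exact: num_real.
Unshelve. all: by end_near. Qed.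

Lemma bdm_cst c : bdm (fun=> c).
Proof. by split; [exact: measurable_cst | exists `|c|]. Qed.

Lemma bdmD f g : bdm f -> bdm g -> bdm (fun x => f x + g x).
Proof.
move=> [mf [M hM]] [mg [N hN]]; split; first exact: measurable_realfun.measurable_funD.
by exists (M + N) => x; rewrite (le_trans (ler_normD _ _)) // lerD.
Qed.

Lemma bdmM f g : bdm f -> bdm g -> bdm (fun x => f x * g x).
Proof.
move=> [mf [M hM]] [mg [N hN]]; split; first exact: measurable_realfun.measurable_funM.
exists (M * N) => x; rewrite normrM ler_pM //.
Qed.

Lemma bdm_sum (I : Type) (r : seq I) (F : I -> L -> R) :
  (forall i, bdm (F i)) -> bdm (fun x => \sum_(i <- r) F i x).
Proof.
move=> H; elim: r => [|i r IH].
  by under eq_fun do rewrite big_nil; exact: bdm_cst.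
by under eq_fun do rewrite big_cons; exact: bdmD.
Qed.

Lemma bdm_indic (E : set L) : measurable E -> bdm (\1_E : L -> R).
Proof.
move=> mE; split; first exact: measurable_realfun.measurable_indic.
by exists 1 => x; rewrite indicE; case: (_ \in _); rewrite ?normr1 ?normr0.
Qed.

Lemma Rint_sum (I : Type) (r : seq I) (F : I -> L -> R) :
  (forall i, bdm (F i)) ->
  \int[mu]_x (\sum_(i <- r) F i x) = \sum_(i <- r) \int[mu]_x F i x.
Proof.
move=> H; elim: r => [|i r IH].
  rewrite big_nil; under eq_Rintegral do rewrite big_nil.
  by rewrite /Rintegral integral0.
rewrite big_cons; under eq_Rintegral do rewrite big_cons.
rewrite RintegralD //; first by rewrite IH.
  exact/bdm_int.
by apply/bdm_int/bdm_sum.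
Qed.

Lemma RintZ c f : bdm f -> \int[mu]_x (c * f x) = c * \int[mu]_x f x.
Proof. by move=> hf; rewrite RintegralZl //; exact: bdm_int. Qed.


Definition EN (X Y : L -> R) (N : nat) : set L :=
  [set x | 0 < Y x /\ N.+1%:R * Y x <= X x].

Lemma EN_meas X Y N : measurable_fun setT X -> measurable_fun setT Y ->
  measurable (EN X Y N).
Proof.
move=> mX mY.
have -> : EN X Y N = (Y @^-1` `]0, +oo[) `&`
    ((fun x => X x - N.+1%:R * Y x) @^-1` `[0, +oo[).
  by apply/seteqP; split => x /=; rewrite !in_itv /= !andbT subr_ge0.
apply: measurableI.
  by rewrite -[X in measurable X]setTI; apply: mY => //; exact: measurable_itv.
rewrite -[X in measurable X]setTI.
have mf : measurable_fun setT (fun x => X x - N.+1%:R * Y x).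
  apply: measurable_realfun.measurable_funB => //.
  apply: measurable_realfun.measurable_funM => //; exact: measurable_cst.
by apply: mf => //; exact: measurable_itv.
Qed.

Lemma G_cvg X Y : bdm X -> bdm Y -> (forall x, 0 <= X x) ->
  (fun N => \int[mu]_x (X x * \1_(EN X Y N) x)) @ \oo --> 0.
Proof.
move=> bX [mY _] X0; have bX' := bX; case: bX' => mX [M hM].
apply: (@fine_cvg _ _ _ _ (fun N => \int[mu]_x (X x * \1_(EN X Y N) x)%:E)%E 0).
have -> : (0%:E : \bar R) = (\int[mu]_x (cst 0%E x))%E by rewrite integral0.
apply: (@dominated_cvg _ _ _ mu setT measurableT
   (fun N x => (X x * \1_(EN X Y N) x)%:E) (cst 0%E) (EFin \o X)).
- move=> N; apply/measurable_realfun.measurable_EFinP.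
  apply: measurable_realfun.measurable_funM => //.
  exact/measurable_realfun.measurable_indic/EN_meas.
- move=> x _; apply: cvg_near_cst.
  have [Yp|Yn] := ltP 0 (Y x); last first.
    exists 0%N => // N _ /=; rewrite indicE memNset ?mulr0 //.
    by move=> [] Yp; move: (lt_le_trans Yp Yn); rewrite ltxx.
  exists (Num.trunc (X x / Y x)) => // N /= hN.
  rewrite indicE memNset ?mulr0 // => -[_].
  apply/negP; rewrite -ltNge.
  rewrite -ltr_pdivrMr // (lt_le_trans (truncnS_gt _)) // ler_nat.
  exact: hN.
- by [].
- exact: bdm_int.
- move=> N x _ /=; rewrite lee_fin normrM ger0_norm //.
  by rewrite indicE; case: (_ \in _); rewrite ?normr1 ?normr0 ?mulr1 ?mulr0.
Qed.


Lemma core (X Y F : L -> R) (b d0 e1 s0 : R) :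
  0 < b -> 0 < s0 ->
  bdm X -> bdm Y -> bdm F ->
  (forall x, 0 <= X x) -> (forall x, 0 <= Y x) ->
  (forall x, Y x = 0 -> F x <= 0) ->
  (forall x eta, 0 < eta -> F x <= eta * X x + Y x / (4 * eta)) ->
  (forall s, 0 < s -> s <= s0 -> exists p : L -> R, exists c : R,
      [/\ bdm p, (forall x, 0 <= p x <= 1), 1/2 <= c,
       \int[mu]_x (p x * F x) = c * s * b + s ^+ 2 * e1 &
       \int[mu]_x (p x * Y x) = s ^+ 2 * d0]) ->
  False.
Proof.
move=> b0 s00 bX bY bF X0 Y0 YF FXY Hs.
set k := 2 * (`|d0| + 1) / b.
have kp : 0 < k by rewrite /k divr_gt0 // mulr_gt0 // ltr_pwDr.
have [N HN] : exists N, \int[mu]_x (X x * \1_(EN X Y N) x) <= b / (8 * k).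
  have := G_cvg bX bY X0.
  move/cvgrPdist_lt => /(_ (b / (8 * k))) [].
    by rewrite divr_gt0 // mulr_gt0.
  move=> N _ HN; exists N; have := HN N (leqnn N).
  rewrite /= sub0r normrN => h; exact: le_trans (ler_norm _) (ltW h).
set G := \int[mu]_x (X x * \1_(EN X Y N) x) in HN.
set T := N.+1%:R / 4 : R.
have T0 : 0 <= T by rewrite /T divr_ge0.
set Q := `|e1| + `|d0| * (1 + T) + 1.
have Qp : 0 < Q by rewrite /Q ltr_pwDr // addr_ge0 // mulr_ge0 // addr_ge0.
set s := Num.min s0 (b / (8 * Q)).
have sp : 0 < s by rewrite /s lt_min s00 divr_gt0 // mulr_gt0.
have ss0 : s <= s0 by rewrite /s ge_min lexx.
have sQ : s <= b / (8 * Q) by rewrite /s ge_min lexx orbT.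
have [p [c [bp p01 c12 hF hY]]] := Hs s sp ss0.
set eta := s * k.
have etap : 0 < eta by rewrite mulr_gt0.
set K := 1 + T + 1 / (4 * eta).
have pw x : p x * F x <= K * (p x * Y x) + eta * (X x * \1_(EN X Y N) x).
  have /andP[p0 p1] := p01 x.
  have I0 : 0 <= X x * \1_(EN X Y N) x.
    by rewrite mulr_ge0 // indicE; case: (_ \in _).
  have K1 : 1 / (4 * eta) <= K by rewrite /K lerDr addr_ge0.
  have K0 : 0 <= K by apply: le_trans K1; rewrite divr_ge0 // mulr_ge0 // ltW.
  have key : F x <= K * Y x + eta * (X x * \1_(EN X Y N) x).
    have [Yz|Ynz] := eqVneq (Y x) 0.
      apply: le_trans (YF x Yz) _.
      by apply: addr_ge0; apply: mulr_ge0 => //; exact: ltW.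
    have Ypos : 0 < Y x by rewrite lt0r Ynz Y0.
    have [xE|xE] := boolP (x \in EN X Y N).
      rewrite indicE xE mulr1 addrC (le_trans (FXY x eta etap)) // lerD2l.
      by rewrite [K * _]mulrC ler_wpM2l // -div1r.
    rewrite indicE (negbTE xE) mulr0 mulr0 addr0.
    have Xlt : X x < N.+1%:R * Y x.
      rewrite ltNge; apply/negP => h; move/negP: xE; apply.
      by rewrite inE; split.
    have np : 0 < (N.+1%:R : R)^-1 by rewrite invr_gt0.
    rewrite (le_trans (FXY x _ np)) //.
    have e1' : (N.+1%:R : R)^-1 * X x <= Y x.
      by rewrite ler_pdivrMl ?ltr0n // ltW.
    have e2' : Y x / (4 * (N.+1%:R)^-1) = T * Y x.
      by rewrite /T invrM ?unitfE ?invr_eq0 ?pnatr_eq0 // invrK; field.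
    rewrite e2' (le_trans (lerD e1' (lexx _))) // /K -[X in X + _]mul1r -mulrDl.
    by rewrite ler_wpM2r // lerDl divr_ge0 // mulr_ge0 // ltW.
  rewrite (le_trans (ler_wpM2l p0 key)) // mulrDr lerD //.
    by rewrite mulrCA.
  rewrite mulrA [p x * eta]mulrC -mulrA ler_wpM2l ?(ltW etap) //.
  by rewrite -[X in _ <= X]mul1r ler_wpM2r.
have bpF := bdmM bp bF.
have bpY := bdmM bp bY.
have bXI : bdm (fun x => X x * \1_(EN X Y N) x).
  apply: bdmM => //; apply: bdm_indic; apply: EN_meas.
    by case: bX.
  by case: bY.
have hint : \int[mu]_x (p x * F x) <= K * (s ^+ 2 * d0) + eta * G.
  rewrite -hY /G -!RintZ //; rewrite -RintegralD //; last 2 first.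
  - exact/bdm_int/bdmM/bpY/bdm_cst.
  - exact/bdm_int/bdmM/bXI/bdm_cst.
  apply: le_Rintegral => //; first exact/bdm_int.
  by apply/bdm_int/bdmD; apply: bdmM => //; exact: bdm_cst.
rewrite hF in hint.
have sn0 : s != 0 by rewrite gt_eqF.
have kn0 : k != 0 by rewrite gt_eqF.
have hK : K * (s ^+ 2 * d0) + eta * G = s * ((1 + T) * s * d0 + d0 / (4 * k) + k * G).
  rewrite /K /eta; field.
  by rewrite kn0 sn0.
have hL : c * s * b + s ^+ 2 * e1 = s * (c * b + s * e1) by ring.
rewrite hK hL ler_pM2l // in hint.
have f1 : b / 2 <= c * b by have := ler_wpM2r (ltW b0) c12; rewrite mul1r [2^-1 * b]mulrC.
have f2 : - (s * e1) <= s * `|e1|.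
  by rewrite -mulrN ler_wpM2l ?(ltW sp) // -normrN ler_norm.
have f3 : (1 + T) * s * d0 <= (1 + T) * s * `|d0|.
  by rewrite ler_wpM2l ?ler_norm // mulr_ge0 ?(ltW sp) // addr_ge0.
have f4 : s * `|e1| + (1 + T) * s * `|d0| <= b / 8.
  have : s * Q <= b / 8.
    have -> : b / 8 = b / (8 * Q) * Q by field; rewrite gt_eqF.
    by apply: ler_wpM2r => //; exact: ltW.
  move=> h; apply: le_trans h; rewrite /Q.
  have -> : s * (`|e1| + `|d0| * (1 + T) + 1) = (s * `|e1| + (1 + T) * s * `|d0|) + s by ring.
  by rewrite lerDl ltW.
have f5 : d0 / (4 * k) <= b / 8.
  have d1 : `|d0| + 1 != 0 by rewrite gt_eqF // ltr_pwDr.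
  have -> : d0 / (4 * k) = (b / 8) * (d0 / (`|d0| + 1)).
    by rewrite /k; field; rewrite d1 gt_eqF.
  rewrite ler_piMr ?divr_ge0 ?(ltW b0) // ler_pdivrMr ?mul1r ?ltr_pwDr //.
  by rewrite (le_trans (ler_norm _)) // lerDl.
have f6 : k * G <= b / 8.
  have := ler_wpM2l (ltW kp) HN.
  have -> : k * (b / (8 * k)) = b / 8 by field; rewrite gt_eqF.
  by [].
lra.
Qed.

End Core.

Section Glue.
Variable R : realType.
Local Notation C := (R[i]).
Local Notation cR r := (@Complex R r 0).

Lemma ReD (x y : C) : complex.Re (x + y) = complex.Re x + complex.Re y.
Proof. by case: x => ? ?; case: y. Qed.
Lemma ReM (x y : C) : complex.Re (x * y) =
  complex.Re x * complex.Re y - complex.Im x * complex.Im y.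
Proof. by case: x => ? ?; case: y. Qed.
Lemma ReRM (r : R) (y : C) : complex.Re (cR r * y) = r * complex.Re y.
Proof. by case: y => ? ? /=; ring. Qed.
Lemma Re_sum I (s : seq I) (F : I -> C) :
  complex.Re (\sum_(i <- s) F i) = \sum_(i <- s) complex.Re (F i).
Proof. by elim/big_rec2: _ => // i y z _ <-; rewrite ReD. Qed.
Lemma conjR (r : R) : (cR r : C)^* = cR r.
Proof. by apply/eqP; rewrite eq_complex /= oppr0 !eqxx. Qed.

Lemma Re_qf n (T : 'M[C]_n) f g : complex.Re (qf T f g) =
  \sum_k \sum_l (complex.Re ((f k 0)^* * g l 0) * complex.Re (T k l)
                - complex.Im ((f k 0)^* * g l 0) * complex.Im (T k l)).
Proof.
rewrite qfE Re_sum; apply: eq_bigr => k _; rewrite Re_sum; apply: eq_bigr => l _.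
by rewrite ReM.
Qed.

Lemma psd_bound n (M : 'M[C]_n) a b (eta : R) : psd M -> 0 < eta ->
  complex.Re (qf M a b) <=
  eta * complex.Re (qf M a a) + complex.Re (qf M b b) / (4 * eta).
Proof.
move=> H e0.
have hba := psd_herm a b H.
have h := H (cR (2 * eta) *: a + (-1) *: b).
move: h; rewrite -/(qf _ _ _) !qfDl !qfDr !qfZl !qfZr hba.
case: (qf M a b) => x1 x2; case: (qf M a a) => p1 p2; case: (qf M b b) => q1 q2.
rewrite lecE /= => /andP[_ h].
rewrite -subr_ge0.
have -> : eta * p1 + q1 / (4 * eta) - x1 =
   (4 * eta) ^-1 * ((2 * eta) * ((2 * eta) * p1) - (2 * eta) * x1 - (2 * eta) * x1 + q1).
  by field; rewrite gt_eqF.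
apply: mulr_ge0; first by rewrite invr_ge0 mulr_ge0 // ltW.
move: h; congr (_ <= _); ring.
Qed.

Lemma qf_e n (M : 'M[C]_n) k l :
  qf M (delta_mx k (0 : 'I_1)) (delta_mx l (0 : 'I_1)) = M k l.
Proof.
rewrite qfE (bigD1 k) //= [X in _ + X]big1 ?addr0; last first.
  by move=> i /negbTE ik; rewrite big1 // => j _; rewrite !mxE ik rmorph0 !mul0r.
rewrite (bigD1 l) //= [X in _ + X]big1 ?addr0; last first.
  by move=> j /negbTE jl; rewrite !mxE jl mulr0 mul0r.
by rewrite !mxE !eqxx rmorph1 !mul1r.
Qed.

Lemma dens_diag n (T : 'M[C]_n) k : density T ->
  0 <= complex.Re (T k k) <= 1.
Proof.
move=> [H tr1].
have ge k' : 0 <= complex.Re (T k' k').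
  by have := H (delta_mx k' 0); rewrite -/(qf _ _ _) qf_e lecE => /andP[_].
rewrite ge /=.
have : complex.Re (\tr T) = 1 by rewrite tr1.
rewrite /mxtrace Re_sum (bigD1 k) //= => <-.
by rewrite lerDl sumr_ge0.
Qed.

Lemma dens_off n (T : 'M[C]_n) k l (z : C) : density T -> z^* * z = 1 ->
  complex.Re (z * T k l) <= 2.
Proof.
move=> hd zz.
have := psd_bound (delta_mx k 0) (z *: delta_mx l 0) hd.1 (ltr01 : (0:R) < 1).
rewrite qfZr qfZl qfZr !qf_e mulrA zz mul1r => h.
apply: le_trans h _.
have /andP[_ h1] := dens_diag k hd; have /andP[h2 h3] := dens_diag l hd.
lra.
Qed.

Lemma dens_bound n (T : 'M[C]_n) k l : density T ->
  `|complex.Re (T k l)| <= 4 /\ `|complex.Im (T k l)| <= 4.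
Proof.
move=> hd.
have e1 : (1:C)^* * 1 = 1 by rewrite rmorph1 mulr1.
have e2 : (-1:C)^* * -1 = 1 by rewrite rmorphN rmorph1 mulrNN mulr1.
have e3 : (@Complex R 0 1)^* * (@Complex R 0 1) = 1.
  by apply/eqP; rewrite eq_complex /=; apply/andP; split; apply/eqP; ring.
have e4 : (@Complex R 0 (-1))^* * (@Complex R 0 (-1)) = 1.
  by apply/eqP; rewrite eq_complex /=; apply/andP; split; apply/eqP; ring.
have h1 := dens_off k l hd e1.
have h2 := dens_off k l hd e2.
have h3 := dens_off k l hd e3.
have h4 := dens_off k l hd e4.
move: h1 h2 h3 h4; case: (T k l) => x y /= h1 h2 h3 h4.
split; rewrite ler_norml; apply/andP; split; lra.
Qed.

End Glue.

Section Int.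
Variable R : realType.
Local Notation C := (R[i]).
Context d (L : measurableType d) (mu : probability L R).
Variable n : nat.
Variable tau : L -> 'M[C]_n.
Hypothesis Hd : forall x, density (tau x).
Hypothesis Hm : forall k l, measurable_fun setT (fun x => complex.Re (tau x k l)) /\
                 measurable_fun setT (fun x => complex.Im (tau x k l)).

Lemma bdmN (f : L -> R) : bdm f -> bdm (fun x => - f x).
Proof.
case=> mf [M hM]; split; first exact: measurable_realfun.measurable_funN.
by exists M => x; rewrite normrN.
Qed.

Lemma bdm_Re k l : bdm (fun x => complex.Re (tau x k l)).
Proof. by split; [case: (Hm k l) | exists 4 => x; case: (dens_bound k l (Hd x))]. Qed.
Lemma bdm_Im k l : bdm (fun x => complex.Im (tau x k l)).
Proof. by split; [case: (Hm k l) | exists 4 => x; case: (dens_bound k l (Hd x))]. Qed.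

Lemma bdm_qf f g : bdm (fun x => complex.Re (qf (tau x) f g)).
Proof.
have -> : (fun x => complex.Re (qf (tau x) f g)) = fun x =>
  \sum_k \sum_l (complex.Re ((f k 0)^* * g l 0) * complex.Re (tau x k l)
                - complex.Im ((f k 0)^* * g l 0) * complex.Im (tau x k l)).
  by apply: funext => x; rewrite Re_qf.
apply: bdm_sum => k; apply: bdm_sum => l.
apply: bdmD; first by apply: bdmM; [exact: bdm_cst | exact: bdm_Re].
by apply: bdmN; apply: bdmM; [exact: bdm_cst | exact: bdm_Im].
Qed.

Lemma int_qf (pp : L -> R) (S : 'M[C]_n) : bdm pp ->
  (forall k l, (complex.Re (S k l))%:E = (\int[mu]_x ((pp x * complex.Re (tau x k l))%:E))%E /\
               (complex.Im (S k l))%:E = (\int[mu]_x ((pp x * complex.Im (tau x k l))%:E))%E) ->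
  forall f g, \int[mu]_x (pp x * complex.Re (qf (tau x) f g)) = complex.Re (qf S f g).
Proof.
move=> bp HS f g.
under eq_Rintegral => x _ do rewrite Re_qf mulr_sumr.
under eq_Rintegral => x _ do under eq_bigr => k _ do rewrite mulr_sumr.
rewrite Rint_sum; last first.
  move=> k; apply: bdm_sum => l; apply: bdmM => //.
  apply: bdmD; first by apply: bdmM; [exact: bdm_cst | exact: bdm_Re].
  by apply: bdmN; apply: bdmM; [exact: bdm_cst | exact: bdm_Im].
rewrite Re_qf; apply: eq_bigr => k _.
rewrite Rint_sum; last first.
  move=> l; apply: bdmM => //.
  apply: bdmD; first by apply: bdmM; [exact: bdm_cst | exact: bdm_Re].
  by apply: bdmN; apply: bdmM; [exact: bdm_cst | exact: bdm_Im].
apply: eq_bigr => l _.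
set a := complex.Re _; set b := complex.Im _.
under eq_Rintegral => x _ do rewrite mulrBr mulrCA [pp x * (b * _)]mulrCA.
rewrite RintegralB //; last 2 first.
- exact/bdm_int/bdmM/bdmM/bdm_Re/bp/bdm_cst.
- exact/bdm_int/bdmM/bdmM/bdm_Im/bp/bdm_cst.
rewrite !RintZ; [|exact/bdmM/bdm_Im/bp|exact/bdmM/bdm_Re/bp].
have [h1 h2] := HS k l.
by rewrite /Rintegral -h1 -h2.
Qed.
End Int.

Section Beta.
Variable R : realType.
Local Notation C := (R[i]).
Local Notation cR r := (@Complex R r 0).

Lemma qadj0 p q : adj (0 : 'M[C]_(p, q)) = 0.
Proof. by apply/matrixP => i j; rewrite !mxE rmorph0. Qed.
Lemma qadjN p q (A : 'M[C]_(p, q)) : adj (- A) = - adj A.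
Proof. by apply/matrixP => i j; rewrite !mxE rmorphN. Qed.
Lemma qadj1 p : adj (1%:M : 'M[C]_p) = 1%:M.
Proof.
by apply/matrixP => i j; rewrite !mxE eq_sym rmorph_nat.
Qed.
Lemma cRM (a b : R) : cR a * cR b = cR (a * b).
Proof. by apply/eqP; rewrite eq_complex /=; apply/andP; split; apply/eqP; ring. Qed.
Lemma cRD (a b : R) : cR a + cR b = cR (a + b).
Proof. by apply/eqP; rewrite eq_complex /=; apply/andP; split; apply/eqP; ring. Qed.

Lemma beta_norm m (a0 a1 : 'cV[C]_m) (c s : R) : orthonormal2 a0 a1 ->
  c ^+ 2 + s ^+ 2 = 1 ->
  adj (cR c *: a0 + cR s *: a1) *m (cR c *: a0 + cR s *: a1) = 1%:M.
Proof.
move=> [h00 [h11 h01]] cs.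
have h10 : adj a1 *m a0 = 0 by rewrite -[a0]qadjK -qadjM h01 qadj0.
rewrite qadjD !qadjZ !conjR mulmxDl !mulmxDr -!scalemxAl -!scalemxAr.
rewrite h00 h11 h01 h10 !scaler0 addr0 add0r !scalerA !cRM -scalerDl cRD.
by rewrite -!expr2 cs scale1r.
Qed.

Definition Pi2 m (P : 'M[C]_m) (a : 'I_2) := if a == ord0 then P else 1%:M - P.

Lemma Pi2_herm m (b : 'cV[C]_m) a : adj (Pi2 (b *m adj b) a) = Pi2 (b *m adj b) a.
Proof.
rewrite /Pi2; case: (a == ord0); first by rewrite qadjM qadjK.
by rewrite qadjD qadjN qadj1 qadjM qadjK.
Qed.

Lemma Pi2_idem m (b : 'cV[C]_m) a : adj b *m b = 1%:M ->
  Pi2 (b *m adj b) a *m Pi2 (b *m adj b) a = Pi2 (b *m adj b) a.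
Proof.
move=> hb.
have PP : b *m adj b *m (b *m adj b) = b *m adj b.
  by rewrite mulmxA -[b *m adj b *m b]mulmxA hb mulmx1.
rewrite /Pi2; case: (a == ord0) => //.
by rewrite mulmxBl mul1mx !mulmxBr mulmx1 PP subrr subr0.
Qed.

Lemma Pi2_sum m (P : 'M[C]_m) : \sum_(a < 2) Pi2 P a = 1%:M.
Proof. by rewrite big_ord_recl big_ord1 /Pi2 /= addrC subrK. Qed.

Definition pvm_beta m (b : 'cV[C]_m) (hb : adj b *m b = 1%:M) : PVM R m :=
  @Build_PVM R m 2 (Pi2 (b *m adj b)) (Pi2_herm b) (fun a => Pi2_idem a hb) (Pi2_sum _).

Lemma assem_beta m n (rho : 'M[C]_(m * n)) (b : 'cV[C]_m) (hb : adj b *m b = 1%:M) :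
  @assemblage R m n rho (pvm_beta hb) ord0 = pmel b b rho.
Proof.
apply/matrixP => k l; rewrite !mxE /= exchange_big /=; apply: eq_bigr => j _.
apply: eq_bigr => i _; rewrite /Pi2 /= !mxE big_ord1 !mxE; ring.
Qed.

End Beta.

Lemma qf_beta (R : realType) m n (rho : 'M[R[i]]_(m * n)) (a0 a1 : 'cV[R[i]]_m)
  (v f : 'cV[R[i]]_n) (c s : R) : psd rho -> pmel a0 a0 rho *m v = 0 ->
  qf (pmel (Complex c 0 *: a0 + Complex s 0 *: a1) (Complex c 0 *: a0 + Complex s 0 *: a1) rho) f v =
  Complex (c * s) 0 * qf (pmel a0 a1 rho) f v + Complex (s ^+ 2) 0 * qf (pmel a1 a1 rho) f v.
Proof.
move=> Hr Hv.
rewrite -qf_kv !kvDl !kvZl !qfDl !qfDr !qfZl !qfZr !conjR.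
rewrite (qf_ker (kv a0 f) Hr Hv).2 (qf_ker (kv a1 f) Hr Hv).2.
rewrite !mulr0 !add0r.
by rewrite !qf_kv !mulrA !cRM expr2.
Qed.

Unset Implicit Arguments.
Theorem proposition1 (R : realType) (m n : nat) (hm : (2 <= m)%N)
  (rho : 'M[R[i]]_(m * n)) (hrho : density rho)
  (a0 a1 : 'cV[R[i]]_m) (ha : orthonormal2 a0 a1) :
  let A := pmel a0 a0 rho in
  let B := pmel a0 a1 rho in
  let D := pmel a1 a1 rho in
  A != 0 ->
  (exists v : 'cV[R[i]]_n, v != 0 /\ ker_of A v) ->
  (exists Ps Pk : 'M[R[i]]_n,
      orth_proj_onto Ps (range_of A) /\ orth_proj_onto Pk (ker_of A) /\
      Ps *m B *m Pk != 0) ->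
  NPT rho /\ proj_steerable rho.
Proof.
move=> A B D _ _ [Ps [Pk [_ [HPk HPB]]]].
have [v [Av Bv]] := get_v HPk HPB.
have Hr := hrho.1.
split; first exact: (npt_main Hr Av Bv).
move=> [d' [L [mu [tau [p [Hdens [Hmeas [Hpm [Hp0 [Hpsum Hint]]]]]]]]]].
set u := B *m v.
set bC := qf B u v.
have bpos : 0 < bC by rewrite /bC /qf -mulmxA pos_norm.
have bRpos : 0 < complex.Re bC by move: bpos; rewrite ltcE => /andP[].
have bIm : complex.Im bC = 0 by move: bpos; rewrite ltcE => /andP[/eqP ->].
apply: (@core R _ L mu (fun x => complex.Re (qf (tau x) u u))
  (fun x => complex.Re (qf (tau x) v v)) (fun x => complex.Re (qf (tau x) u v))
  (complex.Re bC) (complex.Re (qf D v v)) (complex.Re (qf D u v)) (1/2)) => //.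
- exact: bdm_qf.
- exact: bdm_qf.
- exact: bdm_qf.
- by move=> x; have := (Hdens x).1 u; rewrite -/(qf _ _ _) lecE => /andP[].
- by move=> x; have := (Hdens x).1 v; rewrite -/(qf _ _ _) lecE => /andP[].
- move=> x hY.
  have h0 : 0 <= qf (tau x) v v := (Hdens x).1 v.
  have hz : qf (tau x) v v = 0.
    move: h0 hY; case: (qf (tau x) v v) => y1 y2; rewrite lecE /= => /andP[/eqP e _] e2.
    by apply/eqP; rewrite eq_complex /= e2 e eqxx.
  have := psd_zero u (Hdens x).1 hz.
  by rewrite (psd_herm v u (Hdens x).1) => ->; rewrite rmorph0.
- by move=> x eta he; apply: psd_bound => //; exact: (Hdens x).1.
move=> s s0 s12.
set c := Num.sqrt (1 - s ^+ 2).
have c0 : 0 <= c by rewrite sqrtr_ge0.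
have c2 : c ^+ 2 = 1 - s ^+ 2 by rewrite sqr_sqrtr // subr_ge0; nra.
have cs : c ^+ 2 + s ^+ 2 = 1 by rewrite c2 subrK.
have hb := beta_norm ha cs.
set M := pvm_beta hb.
set pp := p M ord0.
have pp01 x : 0 <= pp x <= 1.
  have := Hpsum M x; rewrite /= big_ord_recl big_ord1 => h.
  have := Hp0 M (lift ord0 ord0) x; have := Hp0 M ord0 x.
  rewrite /pp => h1 h2; apply/andP; split => //; lra.
have bpp : bdm pp.
  split; first exact: Hpm.
  by exists 1 => x; have /andP[h1 h2] := pp01 x; rewrite ger0_norm.
exists pp, c; split => //.
- by nra.
- rewrite (int_qf (mu:=mu) Hdens Hmeas bpp (Hint M ord0)) assem_beta qf_beta //.
  by rewrite ReD !ReRM.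
- rewrite (int_qf (mu:=mu) Hdens Hmeas bpp (Hint M ord0)) assem_beta qf_beta //.
  rewrite (_ : qf B v v = 0) ?mulr0 ?add0r ?ReRM //.
  by rewrite /B -qf_kv (qf_ker (kv a1 v) Hr Av).1.
Qed.
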